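(* Let $\mathcal A,\mathcal B\subseteq\mathcal M_n(\mathbb C)$ be unital $*$-subalgebras with equivalent spectral lists, and let $S\in\mathcal M_n(\mathbb C)$. Then $$\mathcal U_n(\mathcal E_{\mathcal A}(\mathcal U_n(S)))=\mathcal U_n(\mathcal E_{\mathcal B}(\mathcal U_n(S)))\quad\text{and}\quad \mathcal U_n(\mathcal E_{\mathcal A}(\mathcal C_n(S)))=\mathcal U_n(\mathcal E_{\mathcal B}(\mathcal C_n(S))).$$
   Context: Every unital $*$-subalgebra $\mathcal A\subseteq\mathcal M_n(\mathbb C)$ is unitarily conjugate to one of the form $\bigoplus_{i=1}^m\mathcal M_{d(i)}(\mathbb C)\otimes1_{c(i)}$ with $\sum_i d(i)c(i)=n$ (where $\mathcal M_d(\mathbb C)\otimes 1_c$ is the set of block diagonal matrices with $c$ equal diagonal blocks in $\mathcal M_d(\mathbb C)$); the list $(d(i),c(i))_{i=1}^m$ is its spectral list, determined up to equivalence, where two lists $(d(i),c(i))_{i=1}^m$, $(d'(i),c'(i))_{i=1}^r$ are equivalent if $m=r$ and they differ by a permutation of indices. $\mathcal E_{\mathcal A}$ is the trace preserving conditional expectation onto $\mathcal A$, i.e. the orthogonal projection onto $\mathcal A$ with respect to $\langle X,Y\rangle=\mathrm{tr}(Y^*X)$. For $\mathcal X\subseteq\mathcal M_n(\mathbb C)$: $\mathcal U_n(\mathcal X)=\{U^*XU:X\in\mathcal X,U\text{ unitary}\}$, $\mathcal C_n(S)=\{V^*SV:\|V\|\le1\}$, $\mathcal E_{\mathcal A}(\mathcal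 X)=\{\mathcal E_{\mathcal A}(x):x\in\mathcal X\}$. *)

(* Defs.v *)
From mathcomp Require Import all_boot all_order all_algebra complex.
From mathcomp Require Import reals.
Set Implicit Arguments. Unset Strict Implicit. Unset Printing Implicit Defensive.
Import GRing.Theory Num.Theory.
Local Open Scope ring_scope.
Local Open Scope complex_scope.

Section MatrixSets.
Variable R : realType.
Local Notation C := R[i].

Definition adj (m k : nat) (M : 'M[C]_(m, k)) : 'M[C]_(k, m) :=
  (map_mx (@conjc R) M)^T.

Variable n : nat.

Definition unitary (U : 'M[C]_n) : Prop :=
  U *m adj U = 1%:M /\ adj U *m U = 1%:M.

Definition star_subalg (A : 'M[C]_n -> Prop) : Prop :=
  [/\ A 1%:M,
      (forall x y, A x -> A y -> A (x + y)),
      (forall (c : C) x, A x -> A (c *: x)),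
      (forall x y, A x -> A y -> A (x *m y)) &
      (forall x, A x -> A (adj x))].

(* For a list s = [:: (d 0, c 0); ...; (d (m-1), c (m-1))], the k-th basis
   index of C^n (n = sum d(i) c(i)) is labelled by the triple (i, j, r):
   block i, copy j < c i, row r < d i, enumerated in the order of the
   block-diagonal decomposition  (+)_i M_{d(i)} (x) 1_{c(i)}. *)
Definition blk_labels (s : seq (nat * nat)) : seq (nat * nat * nat) :=
  flatten [seq flatten [seq [seq (i, j, r) | r <- iota 0 (nth (0, 0) s i).1]
                           | j <- iota 0 (nth (0, 0) s i).2]
          | i <- iota 0 (size s)].

(* M belongs to (+)_i M_{d(i)}(C) (x) 1_{c(i)}: block diagonal, the c(i)
   diagonal copies of block i all equal to the same X_i in M_{d(i)}(C). *)
Definition block_alg (s : seq (nat * nat)) (M : 'M[C]_n) : Prop :=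
  exists X : nat -> nat -> nat -> C,
    forall k l : 'I_n,
      let a := nth (0, 0, 0) (blk_labels s) k in
      let b := nth (0, 0, 0) (blk_labels s) l in
      M k l = if (a.1.1 == b.1.1) && (a.1.2 == b.1.2) then X a.1.1 a.2 b.2
              else 0.

Definition spectral_list (A : 'M[C]_n -> Prop) (s : seq (nat * nat)) : Prop :=
  [/\ all (fun p => (0 < p.1)%N && (0 < p.2)%N) s,
      (\sum_(p <- s) p.1 * p.2)%N = n &
      exists U, unitary U /\
        forall M, A M <-> exists X, block_alg s X /\ M = adj U *m X *m U].

Definition equiv_lists (s t : seq (nat * nat)) : Prop := perm_eq s t.

(* Y = E_A(x): the orthogonal projection of x onto A for <X,Y> = tr(Y^* X) *)
Definition cond_exp (A : 'M[C]_n -> Prop) (x y : 'M[C]_n) : Prop :=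
  A y /\ forall a, A a -> \tr (adj a *m (x - y)) = 0.

Definition EA (A : 'M[C]_n -> Prop) (X : 'M[C]_n -> Prop) : 'M[C]_n -> Prop :=
  fun y => exists2 x, X x & cond_exp A x y.

Definition Un (X : 'M[C]_n -> Prop) : 'M[C]_n -> Prop :=
  fun Y => exists x U, [/\ X x, unitary U & Y = adj U *m x *m U].

(* ||V|| <= 1 (operator norm): ||V v||^2 <= ||v||^2 for all v *)
Definition contraction (V : 'M[C]_n) : Prop :=
  forall v : 'cV[C]_n,
    (adj (V *m v) *m (V *m v)) 0 0 <= (adj v *m v) 0 0.

Definition Cn (S : 'M[C]_n) : 'M[C]_n -> Prop :=
  fun Y => exists2 V, contraction V & Y = adj V *m S *m V.

End MatrixSets.

(* Main.v *)
Require Import Defs.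
From mathcomp Require Import all_boot all_order all_algebra complex.
From mathcomp Require Import reals.
From mathcomp Require Import fingroup perm.
Set Implicit Arguments. Unset Strict Implicit. Unset Printing Implicit Defensive.
Import Order.TTheory GRing.Theory Num.Theory.

Lemma size_flatten_map (T U : Type) (F : T -> seq U) xs :
  size (flatten (map F xs)) = \sum_(x <- xs) size (F x).
Proof. by elim: xs => [|x xs IH]; rewrite ?big_nil // big_cons /= size_cat IH. Qed.

Lemma size_labels s : size (blk_labels s) = \sum_(p <- s) p.1 * p.2.
Proof.
rewrite /blk_labels size_flatten_map (big_nth (0,0)) /index_iota subn0.
apply: eq_bigr => i _; rewrite size_flatten_map.
under eq_bigr do rewrite size_map size_iota.
by rewrite big_const_seq count_predT size_iota iter_addn_0.
Qed.

Lemma uniq_flatten_key (T K : eqType) (key : T -> K) (F : K -> seq T) xs :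
  uniq xs -> (forall x, uniq (F x)) -> (forall x y, y \in F x -> key y = x) ->
  uniq (flatten (map F xs)).
Proof.
move=> + hu hk; elim: xs => [|x xs IH] //= /andP[xn ux].
rewrite cat_uniq hu IH // andbT; apply/hasPn => y /flattenP [l /mapP [x' x'in ->]] yin.
apply/negP => yx; move: xn; rewrite -(hk _ _ yx) (hk _ _ yin) x'in //.
Qed.

Lemma uniq_labels s : uniq (blk_labels s).
Proof.
rewrite /blk_labels; apply: (@uniq_flatten_key _ nat (fun a : nat * nat * nat => a.1.1)); first exact: iota_uniq.
- move=> i; apply: (@uniq_flatten_key _ nat (fun a : nat * nat * nat => a.1.2)).
  + exact: iota_uniq.
  + by move=> j; rewrite map_inj_uniq ?iota_uniq // => r r' [] ->.
  + by move=> j0 y /mapP [r _ ->].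
- by move=> i0 y /flattenP [l /mapP [j _ ->]] /mapP [r _ ->].
Qed.

Lemma mem_labels s i j r : ((i,j,r) \in blk_labels s) =
  [&& i < size s, j < (nth (0,0) s i).2 & r < (nth (0,0) s i).1].
Proof.
apply/flattenP/and3P.
  move=> [l /mapP [i' + ->]] /flattenP [l' /mapP [j' + ->]] /mapP [r' + [-> -> ->]].
  by rewrite !mem_iota.
move=> [hi hj hr]; exists (flatten [seq [seq (i, j0, r0) | r0 <- iota 0 (nth (0, 0) s i).1]
                           | j0 <- iota 0 (nth (0, 0) s i).2]).
  by apply/mapP; exists i; rewrite // mem_iota.
apply/flattenP; exists [seq (i, j, r0) | r0 <- iota 0 (nth (0, 0) s i).1].
  by apply/mapP; exists j; rewrite // mem_iota.
by apply/mapP; exists r; rewrite // mem_iota.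
Qed.


Lemma relabel (n : nat) (s t : seq (nat * nat)) :
  perm_eq t s -> (\sum_(p <- s) p.1 * p.2)%N = n -> (\sum_(p <- t) p.1 * p.2)%N = n ->
  exists (g : 'S_n) (sig : nat -> nat),
    [/\ forall k : 'I_n, nth (0,0,0) (blk_labels s) (g k) =
          (sig (nth (0,0,0) (blk_labels t) k).1.1,
               (nth (0,0,0) (blk_labels t) k).1.2, (nth (0,0,0) (blk_labels t) k).2),
        forall k : 'I_n, (nth (0,0,0) (blk_labels t) k).1.1 < size t &
        forall i j, i < size t -> j < size t -> (sig i == sig j) = (i == j)].
Proof.
move=> hp hs ht.
have hsz : size t = size s by apply: perm_size.
have /tuple_permP [p Hp] : perm_eq t (in_tuple s) by [].
pose sig i := if insub i is Some j then val (p j) else i.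
have sigE : forall j : 'I_(size s), sig j = p j by move=> j; rewrite /sig valK.
have htn : forall j : 'I_(size s), nth (0,0) t j = nth (0,0) s (p j).
  by move=> j; rewrite Hp -tnth_nth tnth_mktuple (tnth_nth (0,0)).
have sig_inj i j : i < size t -> j < size t -> (sig i == sig j) = (i == j).
  rewrite hsz => hi hj.
  have -> : i = Ordinal hi by [].
  have -> : j = Ordinal hj by [].
  by rewrite !sigE (inj_eq val_inj) (inj_eq (@perm_inj _ p)).
pose lt (k : 'I_n) := nth (0,0,0) (blk_labels t) k.
have ltin : forall k : 'I_n, lt k \in blk_labels t.
  by move=> k; apply: mem_nth; rewrite size_labels ht.
have lt1 : forall k : 'I_n, (lt k).1.1 < size t.
  move=> k; move: (ltin k); case: (lt k) => [[i j] r].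
  by rewrite mem_labels => /and3P [].
pose phi (a : nat * nat * nat) := (sig a.1.1, a.1.2, a.2).
have phin : forall k : 'I_n, phi (lt k) \in blk_labels s.
  move=> k; move: (ltin k); rewrite /phi; case: (lt k) => [[i j] r] /=.
  rewrite !mem_labels => /and3P [hi hj hr].
  move: hi hj hr; rewrite hsz => hi; have -> : i = Ordinal hi by [].
  by rewrite htn sigE ltn_ord => -> ->.
have gl : forall k : 'I_n, index (phi (lt k)) (blk_labels s) < n.
  by move=> k; rewrite -hs -size_labels index_mem.
pose g0 (k : 'I_n) := Ordinal (gl k).
have g0inj : injective g0.
  move=> k k' /(congr1 val) /= e.
  have : phi (lt k) = phi (lt k').
    by rewrite -(nth_index (0,0,0) (phin k)) e nth_index.
  move=> h3; apply: val_inj; apply/eqP.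
  rewrite -(nth_uniq (0,0,0) _ _ (uniq_labels t)) ?size_labels ?ht ?ltn_ord //.
  move: (lt1 k) (lt1 k') h3; rewrite /phi -/(lt k) -/(lt k').
  case: (lt k) => [[i j] r]; case: (lt k') => [[i' j'] r'] /= hi hi' [].
  by move=> /eqP; rewrite sig_inj // => /eqP -> -> ->.
exists (perm g0inj), sig; split => // k.
by rewrite permE /= nth_index.
Qed.

Local Open Scope ring_scope.
Section Gen.
Variable R : realType.
Local Notation C := R[i].

Lemma adjM m k p (A : 'M[C]_(m,k)) (B : 'M[C]_(k,p)) : adj (A *m B) = adj B *m adj A.
Proof. by rewrite /adj map_mxM trmx_mul. Qed.

Lemma adjK m k (A : 'M[C]_(m,k)) : adj (adj A) = A.
Proof.
rewrite /adj map_trmx trmxK -map_mx_comp map_mx_id // => x /=; exact: conjcK.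
Qed.

Lemma adjB m k (A B : 'M[C]_(m,k)) : adj (A - B) = adj A - adj B.
Proof. by rewrite /adj map_mxB linearB. Qed.

Lemma adj1 k : adj (1%:M : 'M[C]_k) = 1%:M.
Proof. by rewrite /adj map_mx1 trmx1. Qed.

Lemma adj_perm k (s : 'S_k) : adj (perm_mx s : 'M[C]_k) = perm_mx s^-1.
Proof. by rewrite /adj map_perm_mx tr_perm_mx. Qed.

Variable n : nat.

Lemma unitaryM (U V : 'M[C]_n) : unitary U -> unitary V -> unitary (U *m V).
Proof.
move=> [U1 U2] [V1 V2]; split; rewrite adjM.
  by rewrite mulmxA -(mulmxA U) V1 mulmx1 U1.
by rewrite mulmxA -(mulmxA (adj V)) U2 mulmx1 V2.
Qed.

Lemma unitary_adj (U : 'M[C]_n) : unitary U -> unitary (adj U).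
Proof. by move=> [U1 U2]; split; rewrite adjK. Qed.

Lemma unitary_perm (s : 'S_n) : unitary (perm_mx s : 'M[C]_n).
Proof. by split; rewrite adj_perm -perm_mxM ?mulVg ?mulgV perm_mx1. Qed.

Definition uinv (X : 'M[C]_n -> Prop) :=
  forall x U, X x -> unitary U -> X (adj U *m x *m U).

Lemma transfer (A B : 'M[C]_n -> Prop) (W : 'M[C]_n) (X : 'M[C]_n -> Prop) :
  unitary W -> (forall M, B M <-> A (W *m M *m adj W)) -> uinv X ->
  forall Y, Un (EA B X) Y -> Un (EA A X) Y.
Proof.
move=> [W1 W2] hAB hX Y [y [U [[x Xx [By hy]] hU ->]]].
exists (W *m y *m adj W), (W *m U); split; last first.
- rewrite adjM !mulmxA -(mulmxA _ (adj W)) W2 mulmx1 -(mulmxA _ (adj W)) W2 mulmx1.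
  by [].
- by apply: unitaryM.
exists (W *m x *m adj W).
  by have := hX x (adj W) Xx (unitary_adj (conj W1 W2)); rewrite adjK.
split; first by rewrite -hAB.
move=> a Aa.
have Ba : B (adj W *m a *m W).
  by rewrite hAB !mulmxA W1 mul1mx -mulmxA W1 mulmx1.
have := hy _ Ba.
rewrite -mulmxBl -mulmxBr !adjM adjK => <-.
by rewrite !mulmxA mxtrace_mulC !mulmxA.
Qed.


Lemma uinv_Un (S : 'M[C]_n) : uinv (Un (fun X => X = S)).
Proof.
move=> x U [x0 [U0 [-> hU0 ->]]] hU; exists S, (U0 *m U); split => //.
  exact: unitaryM.
by rewrite adjM !mulmxA.
Qed.

Lemma uinv_Cn (S : 'M[C]_n) : uinv (Cn S).
Proof.
move=> x U [V hV ->] [U1 U2]; exists (V *m U); last by rewrite adjM !mulmxA.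
move=> v; rewrite -mulmxA; apply: le_trans (hV (U *m v)) _.
by rewrite adjM mulmxA -(mulmxA _ (adj U)) U2 mulmx1 le_refl.
Qed.

End Gen.

Section Block.
Variable R : realType.
Local Notation C := R[i].
Variable n : nat.

Section WithG.
Variables (s t : seq (nat * nat)) (g : 'S_n) (sig : nat -> nat).
Hypothesis H1 : forall k : 'I_n, nth (0,0,0) (blk_labels s) (g k) =
          (sig (nth (0,0,0) (blk_labels t) k).1.1,
               (nth (0,0,0) (blk_labels t) k).1.2, (nth (0,0,0) (blk_labels t) k).2).
Hypothesis H2 : forall k : 'I_n, ((nth (0,0,0) (blk_labels t) k).1.1 < size t)%N.
Hypothesis H3 : forall i j, (i < size t)%N -> (j < size t)%N -> (sig i == sig j) = (i == j).

Lemma blockA (M : 'M[C]_n) : block_alg s M -> block_alg t (row_perm g (col_perm g M)).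
Proof.
move=> [X hX]; exists (fun i => X (sig i)) => k l /=.
by rewrite !mxE hX !H1 /= H3.
Qed.

Lemma blockB (M : 'M[C]_n) : block_alg t M -> block_alg s (row_perm (g^-1)%g (col_perm (g^-1)%g M)).
Proof.
move=> [X hX].
pose xs := iota 0 (size t).
exists (fun b => X (nth 0 xs (index b (map sig xs)))) => k l /=.
have e : forall k' : 'I_n, nth (0,0,0) (blk_labels s) k' =
    let a := nth (0,0,0) (blk_labels t) ((g^-1)%g k') in (sig a.1.1, a.1.2, a.2).
  by move=> k'; rewrite -{1}(permKV g k') H1.
have ix : forall i, (i < size t)%N -> nth 0 xs (index (sig i) (map sig xs)) = i.
  move=> i hi; apply: nth_index_map; last by rewrite mem_iota.
  move=> x y; rewrite !mem_iota /= => hx hy /eqP; rewrite H3 //; exact/eqP.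
by rewrite !mxE hX !e /= H3 // ix.
Qed.

End WithG.
End Block.

Lemma cancelR (R : realType) n (U A : 'M[R[i]]_n) : U *m adj U = 1%:M -> A *m U *m adj U = A.
Proof. by move=> h; rewrite -mulmxA h mulmx1. Qed.
Lemma cancelL (R : realType) n (U A : 'M[R[i]]_n) : adj U *m U = 1%:M -> A *m adj U *m U = A.
Proof. by move=> h; rewrite -mulmxA h mulmx1. Qed.

Lemma conjK1 (R : realType) n (W M : 'M[R[i]]_n) : unitary W ->
  adj W *m (W *m M *m adj W) *m W = M.
Proof. by case=> W1 W2; rewrite !mulmxA W2 mul1mx (cancelL _ W2). Qed.
Lemma conjK2 (R : realType) n (W M : 'M[R[i]]_n) : unitary W ->
  W *m (adj W *m M *m W) *m adj W = M.
Proof. by case=> W1 W2; rewrite !mulmxA W1 mul1mx (cancelR _ W1). Qed.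

Theorem lemma3p7 (R : realType) (n : nat) (A B : 'M[R[i]]_n -> Prop)
    (sA sB : seq (nat * nat)) :
  star_subalg A -> star_subalg B ->
  spectral_list A sA -> spectral_list B sB -> equiv_lists sA sB ->
  forall S : 'M[R[i]]_n,
    (forall Y, Un (EA A (Un (fun X => X = S))) Y <->
               Un (EA B (Un (fun X => X = S))) Y) /\
    (forall Y, Un (EA A (Cn S)) Y <-> Un (EA B (Cn S)) Y).
Proof.
move=> _ _ [_ hsA [UA [hUA hA]]] [_ hsB [UB [hUB hB]]] hp S.
have hp' : perm_eq sB sA by rewrite perm_sym.
have [g [sig [H1 H2 H3]]] := relabel hp' hsA hsB.
pose P : 'M[R[i]]_n := perm_mx g.
have hP := unitary_perm R g.
have ePl : forall M : 'M[R[i]]_n, row_perm g (col_perm g M) = P *m M *m adj P.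
  by move=> M; rewrite row_permE col_permE adj_perm mulmxA.
have ePr : forall M : 'M[R[i]]_n, row_perm (g^-1)%g (col_perm (g^-1)%g M) = adj P *m M *m P.
  by move=> M; rewrite row_permE col_permE adj_perm invgK mulmxA.
pose W := adj UA *m adj P *m UB.
have hW : unitary W.
  by rewrite /W; apply: unitaryM => //; apply: unitaryM; apply: unitary_adj.
case: hUA => UA1 UA2; case: hUB => UB1 UB2; case: (hP) => P1 P2.
have hBA : forall M, B M <-> A (W *m M *m adj W).
  move=> M; rewrite hB hA; split.
    move=> [Y [hY ->]]; exists (adj P *m Y *m P); split.
      by rewrite -ePr; apply: blockB H1 H2 H3 _ hY.
    rewrite /W !adjM !adjK !mulmxA.
    by rewrite ?(cancelR _ UB1) ?(cancelL _ UB2).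
  move=> [X [hX e]]; exists (P *m X *m adj P); split.
    by rewrite -ePl; apply: blockA H1 H2 H3 _ hX.
  have -> : M = adj W *m (W *m M *m adj W) *m W.
    by rewrite conjK1.
  rewrite e /W !adjM !adjK !mulmxA.
  by rewrite ?(cancelR _ UA1) ?(cancelL _ UA2).
have hAB : forall M, A M <-> B (adj W *m M *m W).
  by move=> M; rewrite hBA conjK2.
have hWa := unitary_adj hW.
have hAB' : forall M, A M <-> B (adj W *m M *m adj (adj W)) by move=> M; rewrite adjK.
split => Y; split.
- apply: (transfer hWa hAB'); exact: uinv_Un.
- apply: (transfer hW hBA); exact: uinv_Un.
- apply: (transfer hWa hAB'); exact: uinv_Cn.
- apply: (transfer hW hBA); exact: uinv_Cn.
Qed.
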